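(* Consider the following model of a Kater reversible pendulum. A rigid bar of length $L$ and mass $m_b$ carries two knife-edge pivots $c_1$ and $c_2$ placed symmetrically on the bar, with a linear coordinate along the bar having origin at $c_1$ and $c_2$ at $x=d>0$. A fixed disk of mass $m_f$ and radius $r_f$ is centred at $x_f$ with $(d-L)/2<x_f<0$, and a movable disk of mass $m_m$ and radius $r_m$ is centred at a variable position $x$. Let $m=m_b+m_f+m_m$, $K=\frac{\frac d2 m_b+x_f m_f}{m}$, and let $h_1=K+\frac{m_m}{m}x$, $h_2=d-h_1$ be the distances of the centre of mass from $c_1$ and $c_2$. Let \[ I_0''=\frac{r_f^2}{2}m_f+\frac{r_m^2}{2}m_m+\frac{L^2}{12}m_b,\qquad I_0'=I_0''+m_f(x_f-K)^2+m_b\left(\tfrac d2-K\right)^2+m_mK^2, \] and let $I_0=m_m\frac{m-m_m}{m}x^2-2m_mKx+I_0'$ be the moment of inertia about the centre of mass. The equivalent length for oscillation about $c_i$ is $l_i=\frac{I_0+mh_i^2}{mh_i}$, and a characteristic position is a position $x$ of the movable disk with $l_1=l_2$ (equivalently equal periods $T_i=2\pi\sqrt{l_i/g}$ of small oscillations about both pivots); the common value $l$ is the associated characteristic length. Then: (i) if the bar is sufficiently long, namely $\frac{m_f}{m_m}|d-2x_f|\le L$, the pendulum always admits the characteristic position \[ x_{0_1}=\frac d2+\frac{m_f}{2m_m}(d-2x_f), \] whose characteristic length \[ l(x_{0_1})=\frac d2+2\frac{I_0''}{md}+\frac{m_f(m_m+m_f)(d-2x_f)^2}{2m_m m d} \]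 does not in general coincide with the distance $d$ between the pivots; (ii) under the condition $m_md^2+4mdK-4mK^2-4I_0'\ge 0$, the pendulum admits two further characteristic positions \[ x_{0_{2,3}}=\frac d2\pm\frac12\sqrt{d^2+4\,\frac{mK^2-mdK+I_0'}{m_m}}, \] symmetric with respect to the midpoint $d/2$ between the pivots, whose common characteristic length is exactly $d$; (iii) the pendulum admits no further characteristic positions.
   Context: Small oscillations about pivot $c_i$ obey $\ddot\varphi+\frac{mgh_i}{I_i}\varphi=0$ with $I_i=I_0+mh_i^2$ (Huygens–Steiner), so the period is $T_i=2\pi\sqrt{I_i/(mgh_i)}$ and the equivalent (simple-pendulum) length is $l_i=I_i/(mh_i)$. *)

(* Defs.v *)
From HB Require Import structures.
From mathcomp Require Import all_boot all_order all_algebra.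
Set Implicit Arguments. Unset Strict Implicit. Unset Printing Implicit Defensive.
Import Order.TTheory GRing.Theory Num.Theory.
Local Open Scope ring_scope.

Section Kater.
Variable R : rcfType.
Variables (mb mf mm rf rm L d xf : R).

Definition mtot : R := mb + mf + mm.
Definition Kc : R := (d / 2 * mb + xf * mf) / mtot.
Definition h1 (x : R) : R := Kc + mm / mtot * x.
Definition h2 (x : R) : R := d - h1 x.
Definition I0'' : R := rf ^+ 2 / 2 * mf + rm ^+ 2 / 2 * mm + L ^+ 2 / 12 * mb.
Definition I0' : R :=
  I0'' + mf * (xf - Kc) ^+ 2 + mb * (d / 2 - Kc) ^+ 2 + mm * Kc ^+ 2.
Definition I0 (x : R) : R :=
  mm * (mtot - mm) / mtot * x ^+ 2 - 2 * mm * Kc * x + I0'.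
Definition l1 (x : R) : R := (I0 x + mtot * h1 x ^+ 2) / (mtot * h1 x).
Definition l2 (x : R) : R := (I0 x + mtot * h2 x ^+ 2) / (mtot * h2 x).
Definition characteristic (x : R) : Prop :=
  h1 x != 0 /\ h2 x != 0 /\ l1 x = l2 x.

Definition x01 : R := d / 2 + mf / (2 * mm) * (d - 2 * xf).
Definition disc : R := d ^+ 2 - 4 * ((mtot * Kc ^+ 2 - mtot * d * Kc + I0') / mm).
Definition x02 : R := d / 2 + Num.sqrt disc / 2.
Definition x03 : R := d / 2 - Num.sqrt disc / 2.
End Kater.

(* Main.v *)
Require Import Defs.
From HB Require Import structures.
From mathcomp Require Import all_boot all_order all_algebra.
From mathcomp Require Import ring lra.
Import Order.TTheory GRing.Theory Num.Theory.
Local Open Scope ring_scope.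

Lemma I0_eq (R : rcfType) (mb mf mm rf rm L d xf x : R) :
  mtot mb mf mm != 0 ->
  I0 mb mf mm rf rm L d xf x = I0'' mb mf mm rf rm L
   + mf * (xf - h1 mb mf mm d xf x) ^+ 2 + mb * (d / 2 - h1 mb mf mm d xf x) ^+ 2
   + mm * (x - h1 mb mf mm d xf x) ^+ 2.
Proof. move=> Hm; rewrite /I0 /I0' /h1 /Kc; move: Hm; rewrite /mtot => Hm; field; exact Hm. Qed.

Lemma l_diff (R : rcfType) (mb mf mm rf rm L d xf x : R) :
  mtot mb mf mm != 0 -> h1 mb mf mm d xf x != 0 -> h2 mb mf mm d xf x != 0 ->
  l1 mb mf mm rf rm L d xf x - l2 mb mf mm rf rm L d xf x =
  (h1 mb mf mm d xf x - h2 mb mf mm d xf x) *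
  (mtot mb mf mm * h1 mb mf mm d xf x * h2 mb mf mm d xf x - I0 mb mf mm rf rm L d xf x)
  / (mtot mb mf mm * h1 mb mf mm d xf x * h2 mb mf mm d xf x).
Proof. move=> H1 H2 H3; rewrite /l1 /l2; field; rewrite ?H1 ?H2 ?H3 //. Qed.

Lemma quad (R : rcfType) (mb mf mm rf rm L d xf x : R) :
  mtot mb mf mm != 0 -> mm != 0 ->
  I0 mb mf mm rf rm L d xf x - mtot mb mf mm * h1 mb mf mm d xf x * h2 mb mf mm d xf x
  = mm * ((x - d/2) ^+ 2 - disc mb mf mm rf rm L d xf / 4).
Proof. move=> Hm Hmm; rewrite /I0 /h2 /h1 /disc /I0' /Kc; move: Hm; rewrite /mtot => Hm; field; rewrite ?Hm ?Hmm //. Qed.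

Lemma cond_eq (R : rcfType) (mb mf mm rf rm L d xf : R) :
  mm != 0 ->
  mm * d ^+ 2 + 4 * mtot mb mf mm * d * Kc mb mf mm d xf
        - 4 * mtot mb mf mm * Kc mb mf mm d xf ^+ 2
        - 4 * I0' mb mf mm rf rm L d xf = mm * disc mb mf mm rf rm L d xf.
Proof. move=> Hmm; rewrite /disc; field; exact Hmm. Qed.

Lemma I0_pos (R : rcfType) (mb mf mm rf rm L d xf x : R) :
  0 < mb -> 0 < mf -> 0 < mm -> 0 < rf ->
  0 < I0 mb mf mm rf rm L d xf x.
Proof.
move=> Hb Hf Hm Hr.
have Hm0 : mtot mb mf mm != 0 by rewrite /mtot; apply/lt0r_neq0; lra.
rewrite I0_eq //.
set h := h1 _ _ _ _ _ x.
have A : 0 < rf ^+ 2 / 2 * mf by apply: mulr_gt0 => //; apply: divr_gt0 => //; apply: exprn_gt0.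
have B : 0 <= rm ^+ 2 / 2 * mm by apply: mulr_ge0; [apply: divr_ge0; [apply: sqr_ge0|]|]; lra.
have C : 0 <= L ^+ 2 / 12 * mb by apply: mulr_ge0; [apply: divr_ge0; [apply: sqr_ge0|]|]; lra.
have D1 : 0 <= mf * (xf - h) ^+ 2 by apply: mulr_ge0; [lra|apply: sqr_ge0].
have D2 : 0 <= mb * (d / 2 - h) ^+ 2 by apply: mulr_ge0; [lra|apply: sqr_ge0].
have D3 : 0 <= mm * (x - h) ^+ 2 by apply: mulr_ge0; [lra|apply: sqr_ge0].
rewrite /I0''; lra.
Qed.

Theorem corollary2 (R : rcfType) (mb mf mm rf rm L d xf : R) :
  0 < mb -> 0 < mf -> 0 < mm -> 0 < rf -> 0 < rm -> 0 < L -> 0 < d ->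
  (d - L) / 2 < xf -> xf < 0 ->
  (* (i) *)
  (mf / mm * `|d - 2 * xf| <= L ->
     (d - L) / 2 <= x01 mf mm d xf <= (d + L) / 2 /\
     characteristic mb mf mm rf rm L d xf (x01 mf mm d xf) /\
     l1 mb mf mm rf rm L d xf (x01 mf mm d xf)
       = d / 2 + 2 * I0'' mb mf mm rf rm L / (mtot mb mf mm * d)
         + mf * (mm + mf) * (d - 2 * xf) ^+ 2 / (2 * mm * mtot mb mf mm * d)) /\
  (* (ii) *)
  (0 <= mm * d ^+ 2 + 4 * mtot mb mf mm * d * Kc mb mf mm d xf
        - 4 * mtot mb mf mm * Kc mb mf mm d xf ^+ 2
        - 4 * I0' mb mf mm rf rm L d xf ->
     characteristic mb mf mm rf rm L d xf (x02 mb mf mm rf rm L d xf) /\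
     characteristic mb mf mm rf rm L d xf (x03 mb mf mm rf rm L d xf) /\
     l1 mb mf mm rf rm L d xf (x02 mb mf mm rf rm L d xf) = d /\
     l1 mb mf mm rf rm L d xf (x03 mb mf mm rf rm L d xf) = d) /\
  (* (iii) *)
  (forall x : R, characteristic mb mf mm rf rm L d xf x ->
     x = x01 mf mm d xf \/
     (0 <= mm * d ^+ 2 + 4 * mtot mb mf mm * d * Kc mb mf mm d xf
        - 4 * mtot mb mf mm * Kc mb mf mm d xf ^+ 2
        - 4 * I0' mb mf mm rf rm L d xf /\
      (x = x02 mb mf mm rf rm L d xf \/ x = x03 mb mf mm rf rm L d xf))).
Proof.
move=> Hb Hf Hm Hrf Hrm HL Hd Hx1 Hx2.
have Hmt : 0 < mtot mb mf mm by rewrite /mtot; lra.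
have Hm0 : mtot mb mf mm != 0 by apply/lt0r_neq0.
have Hmm0 : mm != 0 by apply/lt0r_neq0.
have Hd0 : d != 0 by apply/lt0r_neq0.
have Hh01 : h1 mb mf mm d xf (x01 mf mm d xf) = d / 2.
  rewrite /h1 /x01 /Kc; move: Hm0; rewrite /mtot => Hm0; field; rewrite ?Hm0 ?Hmm0 //.
have Hh02 : h2 mb mf mm d xf (x01 mf mm d xf) = d / 2 by rewrite /h2 Hh01; field.
have root_char : forall x, (x - d/2) ^+ 2 = disc mb mf mm rf rm L d xf / 4 ->
    characteristic mb mf mm rf rm L d xf x /\ l1 mb mf mm rf rm L d xf x = d.
  move=> x Hx.
  have E : I0 mb mf mm rf rm L d xf x = mtot mb mf mm * h1 mb mf mm d xf x * h2 mb mf mm d xf x.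
    apply/eqP; rewrite -subr_eq0 quad // Hx subrr mulr0 //.
  have P := @I0_pos R mb mf mm rf rm L d xf x Hb Hf Hm Hrf.
  rewrite E in P.
  have Hh1 : h1 mb mf mm d xf x != 0.
    apply/negP => /eqP H; rewrite H mulr0 mul0r in P; lra.
  have Hh2 : h2 mb mf mm d xf x != 0.
    apply/negP => /eqP H; rewrite H mulr0 in P; lra.
  split.
    split; first done; split; first done.
    apply/eqP; rewrite -subr_eq0 l_diff // E subrr mulr0 mul0r //.
  rewrite /l1 E; move: Hh1 Hh2; rewrite /h2 => Hh1 Hh2; field; rewrite ?Hm0 ?Hh1 //.
split.
  move=> Hc; split.
    have Hp : 0 <= d - 2 * xf by lra.
    move: Hc; rewrite (ger0_norm Hp) /x01.
    have -> : mf / (2 * mm) * (d - 2 * xf) = (mf / mm * (d - 2 * xf)) / 2.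
      by field.
    have : 0 <= mf / mm * (d - 2 * xf) by apply: mulr_ge0 => //; apply: divr_ge0; lra.
    move=> H0 H1; apply/andP; split; lra.
  split.
    split; first by rewrite Hh01; apply: lt0r_neq0; lra.
    split; first by rewrite Hh02; apply: lt0r_neq0; lra.
    by rewrite /l1 /l2 Hh01 Hh02.
  rewrite /l1 Hh01 I0_eq // Hh01 /x01.
  move: Hm0; rewrite /mtot => Hm0; field; rewrite ?Hm0 ?Hmm0 ?Hd0 //.
split.
  rewrite cond_eq // => Hc.
  have Hdisc : 0 <= disc mb mf mm rf rm L d xf.
    by rewrite -(pmulr_rge0 _ Hm).
  have S : Num.sqrt (disc mb mf mm rf rm L d xf) ^+ 2 = disc mb mf mm rf rm L d xf
    by rewrite sqr_sqrtr.
  have [C2 E2] : characteristic mb mf mm rf rm L d xf (x02 mb mf mm rf rm L d xf) /\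
      l1 mb mf mm rf rm L d xf (x02 mb mf mm rf rm L d xf) = d.
    apply: (root_char); rewrite /x02 -[in RHS]S; field; done.
  have [C3 E3] : characteristic mb mf mm rf rm L d xf (x03 mb mf mm rf rm L d xf) /\
      l1 mb mf mm rf rm L d xf (x03 mb mf mm rf rm L d xf) = d.
    apply: (root_char); rewrite /x03 -[in RHS]S; field; done.
  by split; [|split; [|split]].
move=> x; rewrite /characteristic => -[Hh1 [Hh2 Hl]].
have : (h1 mb mf mm d xf x - h2 mb mf mm d xf x) *
  (mtot mb mf mm * h1 mb mf mm d xf x * h2 mb mf mm d xf x - I0 mb mf mm rf rm L d xf x)
  / (mtot mb mf mm * h1 mb mf mm d xf x * h2 mb mf mm d xf x) = 0.
  by rewrite -l_diff // Hl subrr.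
move/eqP; rewrite mulf_eq0 invr_eq0 !mulf_eq0 (negbTE Hm0) (negbTE Hh1) (negbTE Hh2) /= orbF.
case/orP => [/eqP H | H].
  left; move: H; rewrite /h2 /h1 /x01 /Kc; move: Hm0; rewrite /mtot => Hm0 H.
  apply/eqP; rewrite -subr_eq0; apply/eqP.
  have : (mb + mf + mm) / mm * (Kc mb mf mm d xf + mm / (mb + mf + mm) * x - (d - (Kc mb mf mm d xf + mm / (mb + mf + mm) * x))) / 2 = 0.
    by rewrite /Kc /mtot H mulr0 mul0r.
  move=> <-; rewrite /Kc /mtot; field; rewrite ?Hm0 ?Hmm0 //.
right.
have Q : (x - d/2) ^+ 2 = disc mb mf mm rf rm L d xf / 4.
  move: H; rewrite -oppr_eq0 opprB quad // mulf_eq0 (negbTE Hmm0) /= subr_eq0 => /eqP //.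
have Hdisc : 0 <= disc mb mf mm rf rm L d xf.
  have := sqr_ge0 (x - d/2); rewrite Q; lra.
split; first by rewrite cond_eq // mulr_ge0 //; lra.
have S : Num.sqrt (disc mb mf mm rf rm L d xf) ^+ 2 = disc mb mf mm rf rm L d xf
  by rewrite sqr_sqrtr.
have : (x - d / 2) ^+ 2 == (Num.sqrt (disc mb mf mm rf rm L d xf) / 2) ^+ 2.
  apply/eqP; rewrite Q -[in LHS]S; field; done.
rewrite eqf_sqr => /orP [/eqP E | /eqP E].
  by left; rewrite /x02 -(subrK (d/2) x) E; ring.
by right; rewrite /x03; apply/eqP; rewrite -subr_eq0; apply/eqP; rewrite -(subrK (d/2) x) E; ring.
Qed.
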